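(* Let $\{x^k\}$ be generated by Algorithm IRG with the backtracking stepsize rule, and assume $\rho_k\to0$. Suppose there is an infinite set $J\subset\mathbb N$ such that $x^k\to\bar x$ along $J$, and that $\nabla f$ is Lipschitz continuous on some neighborhood of $\bar x$. Then $\{t_k\}_{k\in J}$ is bounded away from zero, i.e. $\inf_{k\in J}t_k>0$.
   Context: Algorithm IRG (general inexact reduced gradient framework). Let $f:\mathbb R^n\to\mathbb R$ be continuously differentiable. Parameters: initial point $x^1\in\mathbb R^n$, initial radii $\varepsilon_1>0$, $r_1>0$, reduction factors $\mu,\theta\in(0,1)$, and a sequence $\{\rho_k\}$ of positive numbers. For $k=1,2,\dots$: (1) choose $g^k\in\mathbb R^n$ with $\|g^k-\nabla f(x^k)\|\le\min\{\varepsilon_k,\rho_k\}$; (2) if $\|g^k\|\le r_k+\varepsilon_k$, set $r_{k+1}=\mu r_k$, $\varepsilon_{k+1}=\theta\varepsilon_k$, $d^k=0$; otherwise set $r_{k+1}=r_k$, $\varepsilon_{k+1}=\varepsilon_k$ and $d^k=-\frac{\|g^k\|-\varepsilon_k}{\|g^k\|}g^k$; (3) choose a stepsize $t_k>0$ by some rule; (4) set $x^{k+1}=x^k+t_kd^k$. Backtracking stepsize rule: fix $\beta,\gamma,\tau\in(0,1)$; if $d^k=0$ set $t_k=\tau$; otherwise $t_k=\max\{t\in\{1,\gamma,\gamma^2,\dots\}: f(x^k+td^k)\le f(x^k)-\beta t\|d^k\|^2\}$. *)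

(* Defs.v *)
From HB Require Import structures.
From mathcomp Require Import all_boot all_order all_algebra.
From mathcomp Require Import reals.
Set Implicit Arguments. Unset Strict Implicit. Unset Printing Implicit Defensive.
Import Order.TTheory GRing.Theory Num.Theory.
Local Open Scope ring_scope.

Definition dotv {R : realType} {n : nat} (u v : 'rV[R]_n) : R :=
  \sum_(i < n) u 0 i * v 0 i.
Definition enorm {R : realType} {n : nat} (u : 'rV[R]_n) : R :=
  Num.sqrt (dotv u u).

Definition has_gradient {R : realType} {n : nat}
  (f : 'rV[R]_n -> R) (grad : 'rV[R]_n -> 'rV[R]_n) : Prop :=
  forall x (e : R), 0 < e -> exists2 delta : R, 0 < delta &
    forall y, enorm (y - x) < delta ->
      `| f y - f x - dotv (grad x) (y - x) | <= e * enorm (y - x).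

Definition vcontinuous {R : realType} {n : nat} (g : 'rV[R]_n -> 'rV[R]_n) : Prop :=
  forall x (e : R), 0 < e -> exists2 delta : R, 0 < delta &
    forall y, enorm (y - x) < delta -> enorm (g y - g x) < e.

Definition C1_with_gradient {R : realType} {n : nat}
  (f : 'rV[R]_n -> R) (grad : 'rV[R]_n -> 'rV[R]_n) : Prop :=
  has_gradient f grad /\ vcontinuous grad.

Definition lipschitz_near {R : realType} {n : nat}
  (grad : 'rV[R]_n -> 'rV[R]_n) (xbar : 'rV[R]_n) : Prop :=
  exists delta : R, exists L : R, 0 < delta /\
    forall y z, enorm (y - xbar) < delta -> enorm (z - xbar) < delta ->
      enorm (grad y - grad z) <= L * enorm (y - z).

(* Iterates of Algorithm IRG, indexed from k = 0 (the paper's k = 1). *)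
Definition IRG_iterates {R : realType} {n : nat}
  (f : 'rV[R]_n -> R) (grad : 'rV[R]_n -> 'rV[R]_n)
  (mu theta : R) (rho : nat -> R)
  (x g d : nat -> 'rV[R]_n) (eps r t : nat -> R) : Prop :=
  0 < eps 0%N /\ 0 < r 0%N /\ 0 < mu < 1 /\ 0 < theta < 1 /\
  (forall k, 0 < rho k) /\
  forall k : nat,
    enorm (g k - grad (x k)) <= Num.min (eps k) (rho k) /\
    (if enorm (g k) <= r k + eps k then
       [/\ r k.+1 = mu * r k, eps k.+1 = theta * eps k & d k = 0]
     else
       [/\ r k.+1 = r k, eps k.+1 = eps k &
           d k = - ((enorm (g k) - eps k) / enorm (g k)) *: g k]) /\
    0 < t k /\
    x k.+1 = x k + t k *: d k.

Definition armijo {R : realType} {n : nat} (f : 'rV[R]_n -> R) (beta : R)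
  (xk dk : 'rV[R]_n) (s : R) : Prop :=
  f (xk + s *: dk) <= f xk - beta * s * enorm dk ^+ 2.

Definition backtracking {R : realType} {n : nat} (f : 'rV[R]_n -> R)
  (beta gamma tau : R) (x d : nat -> 'rV[R]_n) (t : nat -> R) : Prop :=
  0 < beta < 1 /\ 0 < gamma < 1 /\ 0 < tau < 1 /\
  forall k : nat,
    if d k == 0 then t k = tau
    else exists j : nat,
      [/\ t k = gamma ^+ j, armijo f beta (x k) (d k) (gamma ^+ j) &
          forall i : nat, (i < j)%N -> ~ armijo f beta (x k) (d k) (gamma ^+ i)].

(* Main.v *)
Require Import Defs.
From HB Require Import structures.
From mathcomp Require Import all_boot all_order all_algebra.
From mathcomp Require Import reals.
From mathcomp Require Import all_classical all_reals all_analysis.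
From mathcomp Require Import ring lra.
Import Order.TTheory GRing.Theory Num.Theory.
Import numFieldNormedType.Exports.
Local Open Scope classical_set_scope.
Local Open Scope ring_scope.

Section V.
Context {R : realType} {n : nat}.
Implicit Types u v w : 'rV[R]_n.

Lemma dotvC u v : dotv u v = dotv v u.
Proof. by apply: eq_bigr => i _; rewrite mulrC. Qed.

Lemma dotvDl u v w : dotv (u + v) w = dotv u w + dotv v w.
Proof. by rewrite /dotv -big_split; apply: eq_bigr => i _; rewrite mxE mulrDl. Qed.

Lemma dotvZl a u v : dotv (a *: u) v = a * dotv u v.
Proof. by rewrite /dotv mulr_sumr; apply: eq_bigr => i _; rewrite mxE mulrA. Qed.

Lemma dotvNl u v : dotv (- u) v = - dotv u v.
Proof. by rewrite -scaleN1r dotvZl mulN1r. Qed.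

Lemma dotvBl u v w : dotv (u - v) w = dotv u w - dotv v w.
Proof. by rewrite dotvDl dotvNl. Qed.

Lemma dotvDr u v w : dotv w (u + v) = dotv w u + dotv w v.
Proof. by rewrite dotvC dotvDl !(dotvC w). Qed.

Lemma dotvZr a u v : dotv v (a *: u) = a * dotv v u.
Proof. by rewrite dotvC dotvZl dotvC. Qed.

Lemma dotvBr u v w : dotv w (u - v) = dotv w u - dotv w v.
Proof. by rewrite dotvC dotvBl !(dotvC w). Qed.

Lemma dotv_ge0 u : 0 <= dotv u u.
Proof. by apply: sumr_ge0 => i _; rewrite -expr2 sqr_ge0. Qed.

Lemma enorm_ge0 u : 0 <= enorm u.
Proof. exact: sqrtr_ge0. Qed.

Lemma enorm_sq u : enorm u ^+ 2 = dotv u u.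
Proof. by rewrite sqr_sqrtr // dotv_ge0. Qed.

Lemma CS_sq u v : dotv u v ^+ 2 <= dotv u u * dotv v v.
Proof.
set a := fun i : 'I_n => u 0 i; set b := fun i : 'I_n => v 0 i.
have E : dotv u u * dotv v v - dotv u v ^+ 2 =
   \sum_(i < n) \sum_(j < n) (a i ^+ 2 * b j ^+ 2 - a i * b i * (a j * b j)).
  rewrite expr2 /dotv !mulr_suml -sumrB; apply: eq_bigr => i _.
  rewrite !mulr_sumr -sumrB; apply: eq_bigr => j _.
  rewrite /a /b; ring.
have E2 : (dotv u u * dotv v v - dotv u v ^+ 2) *+ 2 =
   \sum_(i < n) \sum_(j < n) (a i * b j - a j * b i) ^+ 2.
  rewrite mulr2n {1}E E [in X in _ + X]exchange_big /= -big_split /=.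
  apply: eq_bigr => i _; rewrite -big_split /=; apply: eq_bigr => j _; ring.
have : 0 <= (dotv u u * dotv v v - dotv u v ^+ 2) *+ 2.
  by rewrite E2; apply: sumr_ge0 => i _; apply: sumr_ge0 => j _; exact: sqr_ge0.
by rewrite pmulrn_lge0 // subr_ge0.
Qed.

Lemma CS u v : dotv u v <= enorm u * enorm v.
Proof.
apply: le_trans (ler_norm _) _.
rewrite /enorm -sqrtrM ?dotv_ge0 // -sqrtr_sqr.
by apply: ler_wsqrtr; exact: CS_sq.
Qed.

Lemma enormZ a u : enorm (a *: u) = `|a| * enorm u.
Proof.
by rewrite /enorm dotvZl dotvZr mulrA -expr2 sqrtrM ?sqr_ge0 // sqrtr_sqr.
Qed.

Lemma enormN u : enorm (- u) = enorm u.
Proof. by rewrite -scaleN1r enormZ normrN1 mul1r. Qed.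

Lemma enormB u v : enorm (u - v) = enorm (v - u).
Proof. by rewrite -enormN opprB. Qed.

Lemma enormD u v : enorm (u + v) <= enorm u + enorm v.
Proof.
rewrite -(@ler_pXn2r _ 2) ?nnegrE ?addr_ge0 ?enorm_ge0 //.
rewrite enorm_sq dotvDl !dotvDr sqrrD !enorm_sq (dotvC v u).
have := CS u v; lra.
Qed.

End V.
Lemma deriv1_of_eps (R : realType) (phi : R -> R) (tau a : R) :
  (forall e : R, 0 < e -> exists2 del : R, 0 < del &
     forall h, `|h| < del -> `|phi (h + tau) - phi tau - a * h| <= e * `|h|) ->
  is_derive tau 1 phi a.
Proof.
move=> H.
have C : (fun h : R => h^-1 *: ((phi \o shift tau) (h *: 1) - phi tau)) @ 0^' --> a.
  apply/cvgrPdist_le => e e0.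
  have [del del0 Hd] := H e e0.
  near=> h.
  have hn0 : h != 0 by near: h; exact: nbhs_dnbhs_neq.
  have hd : `|h| < del by near: h; apply: dnbhs0_lt.
  rewrite /= /shift.
  rewrite -[h *: 1]/(h * 1) mulr1.
  have hh : 0 < `|h| by rewrite normr_gt0.
  have -> : a - h^-1 * (phi (h + tau) - phi tau)
     = - (h^-1 * (phi (h + tau) - phi tau - a * h)).
    by rewrite [in RHS]mulrBr opprB [h^-1 * (a * h)]mulrC -mulrA mulfV // mulr1.
  rewrite normrN normrM normrV ?unitfE //.
  rewrite ler_pdivrMl //. have := Hd h hd. rewrite mulrC. move=> HH. apply: le_trans HH _. by rewrite mulrC.
have D1 : derivable phi tau 1 by exact: (cvgP _ C).
have D2 : 'D_1 phi tau = a by exact: (cvg_lim _ C).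
by rewrite -D2; exact: derivableP.
Unshelve. all: by end_near.
Qed.

Lemma enorm0 (R : realType) (n : nat) : enorm (0 : 'rV[R]_n) = 0.
Proof. by rewrite -(scale0r (0 : 'rV[R]_n)) enormZ normr0 mul0r. Qed.

Lemma descent (R : realType) (n : nat) (f : 'rV[R]_n -> R) grad
  (xbar x d : 'rV[R]_n) (del L s : R) :
  has_gradient f grad -> 0 <= L ->
  (forall y z, enorm (y - xbar) < del -> enorm (z - xbar) < del ->
      enorm (grad y - grad z) <= L * enorm (y - z)) ->
  0 < s -> enorm (x - xbar) + s * enorm d < del ->
  f (x + s *: d) - f x <= s * (dotv (grad x) d + L * s * dotv d d).
Proof.
move=> Hf L0 Hl s0 Hin.
pose phi := fun sg : R => f (x + sg *: d).
pose dphi := fun sg : R => dotv (grad (x + sg *: d)) d.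
have K0 : 0 < enorm d + 1 by rewrite ltr_wpDl ?enorm_ge0.
have Dphi : forall tau : R, is_derive tau (1 : R) phi (dphi tau).
  move=> tau; apply: deriv1_of_eps => e e0.
  have e'0 : 0 < e / (enorm d + 1) by rewrite divr_gt0.
  have [dl dl0 Hdl] := Hf (x + tau *: d) _ e'0.
  exists (dl / (enorm d + 1)); first by rewrite divr_gt0.
  move=> h hlt.
  have Ez : x + (h + tau) *: d - (x + tau *: d) = h *: d
    by rewrite scalerDl addrCA addrK.
  have Hn : enorm (h *: d) < dl.
    rewrite enormZ.
    apply: (@le_lt_trans _ _ (`|h| * (enorm d + 1))).
      by rewrite ler_wpM2l // lerDl.
    by rewrite -ltr_pdivlMr.
  have := Hdl (x + (h + tau) *: d); rewrite Ez => /(_ Hn).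
  rewrite /phi /dphi dotvZr [h * _]mulrC enormZ => H.
  apply: le_trans H _.
  have -> : e / (enorm d + 1) * (`|h| * enorm d)
       = (e * `|h|) * (enorm d / (enorm d + 1)) by rewrite !mulrA; ring.
  apply: ler_piMr; first by rewrite mulr_ge0 // ltW.
  by rewrite ler_pdivrMr // mul1r lerDl.
have [c cI Ec] := MVT s0 (fun z _ => Dphi z)
  (derivable_within_continuous (fun z _ => @ex_derive _ _ _ _ _ _ _ (Dphi z))).
move: cI; rewrite in_itv /= => /andP [c0 cs].
have Ephi : f (x + s *: d) - f x = dphi c * s.
  by move: Ec; rewrite /phi scale0r addr0 subr0.
rewrite Ephi mulrC ler_pM2l //.
rewrite /dphi.
have -> : dotv (grad (x + c *: d)) d =
   dotv (grad x) d + dotv (grad (x + c *: d) - grad x) d by rewrite dotvBl addrCA subrr addr0.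
rewrite lerD2l.
apply: le_trans (CS _ _) _.
have hx : enorm (x - xbar) < del.
  by apply: (le_lt_trans _ Hin); rewrite lerDl mulr_ge0 ?enorm_ge0 ?ltW.
have hxc : enorm (x + c *: d - xbar) < del.
  apply: (le_lt_trans _ Hin).
  rewrite addrAC; apply: le_trans (enormD _ _) _; rewrite lerD2l enormZ.
  rewrite ger0_norm; last exact: ltW.
  by apply: ler_wpM2r; [exact: enorm_ge0 | exact: ltW].
apply: le_trans (ler_wpM2r (enorm_ge0 _) (Hl _ _ hxc hx)) _.
rewrite addrAC subrr add0r enormZ ger0_norm; last exact: ltW.
rewrite -enorm_sq.
rewrite expr2 !mulrA ler_wpM2r ?enorm_ge0 // ler_wpM2r ?enorm_ge0 //.
by rewrite ler_wpM2l // ltW.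
Qed.

Lemma minle_l {R : realType} (a b : R) : Num.min a b <= a.
Proof. by rewrite ge_min lexx. Qed.
Lemma minle_r {R : realType} (a b : R) : Num.min a b <= b.
Proof. by rewrite ge_min lexx orbT. Qed.

Lemma step_bound (R : realType) (n : nat) (f : 'rV[R]_n -> R) grad
  (xbar x g : 'rV[R]_n) (del L M beta gamma eps al : R) (j : nat) :
  has_gradient f grad -> 0 < L -> 0 < del ->
  (forall y z, enorm (y - xbar) < del -> enorm (z - xbar) < del ->
      enorm (grad y - grad z) <= L * enorm (y - z)) ->
  M = enorm (grad xbar) + L * del + 1 ->
  0 < beta -> beta < 1 -> 0 < gamma -> gamma < 1 ->
  enorm (g - grad x) <= eps -> eps < enorm g ->
  0 <= al -> al * enorm g = enorm g - eps ->
  enorm (x - xbar) <= del / 4 ->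
  ~ armijo f beta x ((- al) *: g) (gamma ^+ j) ->
  Num.min (gamma * (1 - beta) / L) (gamma * (del / (2 * M))) <= gamma ^+ j.+1.
Proof.
move=> Hf L0 del0 Hl EM b0 b1 g0 g1 Hge Heg al0 Hal Hx Harm.
set ng := enorm g in Heg Hal.
set d := (- al) *: g.
set s := gamma ^+ j.
have s0 : 0 < s by rewrite exprn_gt0.
have eps0 : 0 <= eps by apply: le_trans (enorm_ge0 _) Hge.
have ED : dotv d d = (ng - eps) ^+ 2.
  rewrite /d dotvZl dotvZr -enorm_sq -/ng -Hal; ring.
have Ed : enorm d = ng - eps.
  by rewrite /d enormZ normrN ger0_norm.
have EG : dotv (grad x) d <= - dotv d d.
  rewrite /d dotvZr ED.
  have H1 : dotv (g - grad x) g <= eps * ng.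
    apply: le_trans (CS _ _) _; rewrite ler_wpM2r ?enorm_ge0 //.
  have H2 : ng ^+ 2 - eps * ng <= dotv (grad x) g.
    move: H1; rewrite dotvBl /ng enorm_sq; lra.
  have H3 : al * (ng ^+ 2 - eps * ng) <= al * dotv (grad x) g.
    by apply: ler_wpM2l.
  have H4 : al * (ng ^+ 2 - eps * ng) = (ng - eps) ^+ 2.
    transitivity (al * ng * (ng - eps)); first ring.
    by rewrite Hal expr2.
  lra.
have hx : enorm (x - xbar) < del.
  apply: le_lt_trans Hx _; rewrite ltr_pdivrMr //; lra.
have hxb : enorm (xbar - xbar) < del by rewrite subrr enorm0.
have HgM : ng <= enorm (grad x) + eps.
  have := enormD (grad x) (g - grad x); rewrite addrC subrK -/ng => H.
  by apply: le_trans H _; rewrite lerD2l.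
have HgxM : enorm (grad x) <= enorm (grad xbar) + L * (del / 4).
  have := enormD (grad xbar) (grad x - grad xbar); rewrite addrC subrK => H.
  apply: le_trans H _; rewrite lerD2l.
  apply: le_trans (Hl _ _ hx hxb) _.
  by apply: ler_wpM2l; [exact: ltW | exact: Hx].
have HL4 : L * (del / 4) <= L * del.
  by apply: ler_wpM2l; [exact: ltW | lra].
have dM : enorm d <= M by rewrite Ed EM; lra.
have M0 : 0 < M by rewrite EM; have := enorm_ge0 (grad xbar); have := mulr_gt0 L0 del0; lra.
rewrite exprS -/s.
case: (lerP (del / 2) (s * enorm d)) => Hc.
  apply: le_trans (minle_r _ _) _.
  apply: ler_wpM2l; first exact: ltW.
  rewrite ler_pdivrMr ?mulr_gt0 //.
  have : s * enorm d <= s * M by apply: ler_wpM2l; [exact: ltW | exact: dM].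
  lra.
apply: le_trans (minle_l _ _) _.
have Hin : enorm (x - xbar) + s * enorm d < del by lra.
have Hdes := @descent _ _ f grad xbar x d del L s Hf (ltW L0) Hl s0 Hin.
have Hna : f x - beta * s * enorm d ^+ 2 < f (x + s *: d).
  by rewrite ltNge; apply/negP.
rewrite enorm_sq in Hna.
have D0 : 0 < dotv d d by rewrite ED exprn_gt0 // subr_gt0.
have H5 : s * dotv (grad x) d <= - (s * dotv d d).
  by rewrite -mulrN; apply: ler_wpM2l; [exact: ltW | exact: EG].
have H6 : (s * dotv d d) * (1 - beta) < (s * dotv d d) * (L * s).
  move: Hdes; rewrite mulrDr; lra.
have H7 : 1 - beta < L * s by rewrite ltr_pM2l ?mulr_gt0 // in H6.
rewrite -mulrA; apply: ler_wpM2l; first exact: ltW.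
by rewrite ler_pdivrMr // mulrC; apply: ltW.
Qed.

Fixpoint minpref {R : realType} (t : nat -> R) (N : nat) : R :=
  match N with 0%N => 1 | N'.+1 => Num.min (minpref t N') (t N') end.

Lemma minpref_prop {R : realType} (t : nat -> R) N :
  (forall k, 0 < t k) -> 0 < minpref t N /\ forall k, (k < N)%N -> minpref t N <= t k.
Proof.
move=> tp; elim: N => [|N [IH1 IH2]] /=; first by split=> // k.
split; first by rewrite lt_min IH1 tp.
move=> k; rewrite ltnS leq_eqVlt => /orP [/eqP -> | kN]; first exact: minle_r.
by apply: le_trans (minle_l _ _) (IH2 _ kN).
Qed.

Theorem mainTheorem15 (R : realType) (n : nat)
  (f : 'rV[R]_n -> R) (grad : 'rV[R]_n -> 'rV[R]_n)
  (mu theta beta gamma tau : R) (rho : nat -> R)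
  (x g d : nat -> 'rV[R]_n) (eps r t : nat -> R)
  (J : nat -> bool) (xbar : 'rV[R]_n) :
  C1_with_gradient f grad ->
  IRG_iterates f grad mu theta rho x g d eps r t ->
  backtracking f beta gamma tau x d t ->
  (forall e : R, 0 < e -> exists N : nat, forall k, (N <= k)%N -> `|rho k| <= e) ->
  (forall N : nat, exists k : nat, (N <= k)%N /\ J k) ->
  (forall e : R, 0 < e -> exists N : nat, forall k, (N <= k)%N -> J k ->
       enorm (x k - xbar) <= e) ->
  lipschitz_near grad xbar ->
  exists c : R, 0 < c /\ forall k, J k -> c <= t k.
Proof.
move=> [Hf _] [He0 [Hr0 [Hmu [Hth [Hrho Hk]]]]].
move=> [/andP[b0 b1] [/andP[g0 g1] [/andP[ta0 ta1] Hbt]]] _ _ Hx [del [L [del0 Hlip]]].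
case/andP: Hmu => mu0 _.
pose L' := `|L| + 1.
have L'0 : 0 < L' by rewrite ltr_wpDl.
have Hlip' : forall y z, enorm (y - xbar) < del -> enorm (z - xbar) < del ->
    enorm (grad y - grad z) <= L' * enorm (y - z).
  move=> y z hy hz; apply: le_trans (Hlip y z hy hz) _.
  apply: ler_wpM2r; first exact: enorm_ge0.
  by rewrite /L' (le_trans (ler_norm L)) // lerDl.
have rpos : forall k, 0 < r k.
  elim=> // k IH; have [_ [H _]] := Hk k; move: H.
  by case: ifP => _ [-> _ _] //; rewrite mulr_gt0.
have tpos : forall k, 0 < t k by move=> k; have [_ [_ [H _]]] := Hk k.
pose M := enorm (grad xbar) + L' * del + 1.
have M0 : 0 < M.
  by rewrite /M; have := enorm_ge0 (grad xbar); have := mulr_gt0 L'0 del0; lra.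
have [N HN] := Hx (del / 4) (divr_gt0 del0 (ltr0n _ 4)).
pose c1 := Num.min tau (Num.min 1 (Num.min (gamma * (1 - beta) / L')
                                           (gamma * (del / (2 * M))))).
have [m0 mle] := minpref_prop t N tpos.
exists (Num.min (minpref t N) c1); split.
  rewrite lt_min m0 /= /c1 !lt_min ta0 ltr01 /=.
  by rewrite !mulr_gt0 ?invr_gt0 ?subr_gt0 ?mulr_gt0.
move=> k Jk; case: (ltnP k N) => kN.
  by apply: le_trans (minle_l _ _) (mle _ kN).
apply: le_trans (minle_r _ _) _.
have xk := HN k kN Jk.
have [Hgk [Hif _]] := Hk k.
move: Hif; case: ifP => Hc.
  case=> _ _ dk0; have := Hbt k; rewrite dk0 eqxx => ->.
  exact: minle_l.
case=> _ _ dk; have := Hbt k.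
case: eqP => [_ -> | _ [j [tj _ notarm]]]; first exact: minle_l.
rewrite tj; case: j tj notarm => [|j] tj notarm.
  by rewrite expr0; apply: le_trans (minle_r _ _) (minle_l _ _).
apply: le_trans (minle_r _ _) _; apply: le_trans (minle_r _ _) _.
have Hge : enorm (g k - grad (x k)) <= eps k.
  by apply: le_trans Hgk (minle_l _ _).
have eps0 : 0 <= eps k by apply: le_trans (enorm_ge0 _) Hge.
have Hlt : eps k < enorm (g k).
  move: Hc => /negbT; rewrite -ltNge => Hc.
  by have := rpos k; lra.
have ng0 : 0 < enorm (g k) by lra.
apply: (@step_bound _ _ f grad xbar (x k) (g k) del L' M beta gamma (eps k)
          ((enorm (g k) - eps k) / enorm (g k)) j Hf L'0 del0 Hlip' erefl
          b0 b1 g0 g1 Hge Hlt).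
- by rewrite divr_ge0 // ?subr_ge0 ?ltW.
- by rewrite mulrC mulrCA mulfV ?mulr1 // gt_eqF.
- exact: xk.
- by rewrite -dk; exact: (notarm j (ltnSn j)).
Qed.
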